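(* Let $n\geq1$. For all $a,r\in\mathbb N$ and all $l\in\mathbb N$ with $l\leq n$, $$\sum_{i=0}^l(-1)^i\binom{l}{i}\sum_{j=0}^{n-l+1}(-1)^{n-l+1+j}\binom{n-l+1}{j}\overline{(r+i+j,\,a+r+j)}=\bar0.$$
   Context: $\Lambda_{2,n}=\{\alpha\in\mathbb N^2:1\leq\alpha_1+\alpha_2\leq n\}$, $\lambda_{2,n}=|\Lambda_{2,n}|$, and for $v\in\mathbb N^2$, $\bar v=\big(\binom{v_1}{\alpha_1}\binom{v_2}{\alpha_2}\big)_{\alpha\in\Lambda_{2,n}}\in\mathbb C^{\lambda_{2,n}}$; $\bar0$ is the zero vector. *)

(* Defs.v *)
From HB Require Import structures.
From mathcomp Require Import all_boot all_order all_algebra.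
Set Implicit Arguments. Unset Strict Implicit. Unset Printing Implicit Defensive.
Import Order.TTheory GRing.Theory Num.Theory.
Local Open Scope ring_scope.

(* Lambda_{2,n} = { alpha in N^2 : 1 <= alpha_1 + alpha_2 <= n }, realized as a
   finite subtype of 'I_n.+1 * 'I_n.+1 (each coordinate is automatically <= n). *)
Definition Lambda2 (n : nat) : predArgType :=
  {alpha : 'I_n.+1 * 'I_n.+1 | (0 < alpha.1 + alpha.2 <= n)%N}.

Definition vbar (C : numClosedFieldType) (n : nat) (v : nat * nat)
  : {ffun Lambda2 n -> C} :=
  [ffun alpha : Lambda2 n =>
     ('C(v.1, (val alpha).1) * 'C(v.2, (val alpha).2))%:R].

(* Main.v *)
Require Import Defs.
From HB Require Import structures.
From mathcomp Require Import all_boot all_order all_algebra.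
From mathcomp Require Import ring zify.
Import Order.TTheory GRing.Theory Num.Theory.
Local Open Scope ring_scope.

Definition Df (f : nat -> int) : nat -> int := fun x => f x.+1 - f x.
Definition degle (k : nat) (f : nat -> int) := forall x, iter k.+1 Df f x = 0.

Lemma iter_ext k f g : (forall x, f x = g x) -> forall x, iter k Df f x = iter k Df g x.
Proof. move=> H; elim: k => [|k IH] x //=; by rewrite /Df !IH. Qed.

Lemma iter_lin k f g c1 c2 x :
  iter k Df (fun y => c1 * f y + c2 * g y) x = c1 * iter k Df f x + c2 * iter k Df g x.
Proof. elim: k x => [|k IH] x //=; rewrite /Df !IH; ring. Qed.

Lemma iter_shift k f x : iter k Df (fun y => f y.+1) x = iter k Df f x.+1.
Proof. elim: k x => [|k IH] x //=; by rewrite /Df !IH. Qed.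

Lemma iter_zero k x : iter k Df (fun _ => 0) x = 0.
Proof. elim: k x => [|k IH] x //=; by rewrite /Df !IH subrr. Qed.

Lemma degle_ext k f g : (forall x, f x = g x) -> degle k f -> degle k g.
Proof. move=> H Hf x; by rewrite -(iter_ext k.+1 _ _ H). Qed.

Lemma degleS k f : degle k.+1 f <-> degle k (Df f).
Proof. by rewrite /degle; split=> H x; move: (H x); rewrite [iter k.+2 _ _]iterSr. Qed.

Lemma degle_mono k k' f : (k <= k')%N -> degle k f -> degle k' f.
Proof.
move=> le; elim: k' le => [|k' IH]; first by rewrite leqn0 => /eqP->.
rewrite leq_eqVlt => /orP[/eqP->//|lt] H x.
rewrite iterS /Df; by rewrite !(IH lt H) subrr.
Qed.

Lemma degle_iter k m f x : (k < m)%N -> degle k f -> iter m Df f x = 0.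
Proof.
move=> lt H; have m0 : (0 < m)%N by apply: leq_trans lt.
have le : (k <= m.-1)%N by rewrite -ltnS prednK.
by move: (degle_mono _ _ _ le H x); rewrite prednK.
Qed.

Lemma degle_lin k f g c1 c2 : degle k f -> degle k g -> degle k (fun y => c1 * f y + c2 * g y).
Proof. by move=> Hf Hg x; rewrite iter_lin Hf Hg !mulr0 addr0. Qed.

Lemma degle_shift k f : degle k f -> degle k (fun y => f y.+1).
Proof. by move=> H x; rewrite iter_shift H. Qed.

Lemma degle0_const f : degle 0 f -> forall x, f x = f 0%N.
Proof. move=> H; elim=> [|x IH] //; move: (H x) => /= /eqP; rewrite /Df subr_eq0 => /eqP->//. Qed.

Lemma degle_mul0l b f g : degle 0 f -> degle b g -> degle b (fun x => f x * g x).
Proof.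
move=> Hf Hg; apply: (@degle_ext _ (fun x => f 0%N * g x + 0 * g x)).
  by move=> x; rewrite (degle0_const _ Hf x) mul0r addr0.
exact: degle_lin.
Qed.

Lemma degle_mul a b f g : degle a f -> degle b g -> degle (a + b) (fun x => f x * g x).
Proof.
move: {2}(a + b)%N (erefl (a + b)%N) => s E.
elim: s a b f g E => [|s IH] a b f g E Hf Hg.
  move/eqP: E; rewrite addn_eq0 => /andP[/eqP a0 /eqP b0]; subst; exact: degle_mul0l.
case: a E Hf => [|a] E Hf.
  exact: degle_mul0l.
case: b E Hg => [|b] E Hg.
  rewrite addn0; apply: (@degle_ext _ (fun x => g x * f x)); first by move=> x; rewrite mulrC.
  exact: degle_mul0l.
rewrite addSn; apply/degleS.
apply: (@degle_ext _ (fun x => 1 * (f x.+1 * Df g x) + 1 * (Df f x * g x))).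
  by move=> x; rewrite /Df; ring.
apply: degle_lin.
  rewrite -addSnnS; apply: (IH a.+1 b); first by move: E; rewrite addSn addnS => -[].
    exact: degle_shift.
  by apply/degleS.
apply: (IH a b.+1); first by move: E; rewrite addSn => -[].
  by apply/degleS.
done.
Qed.

Definition Bs m (f : nat -> int) x :=
  \sum_(j < m.+1) (-1) ^+ j * ('C(m, j))%:Z * f (x + j)%N.

Lemma Bs_ext m f x : Bs m f x = \sum_(j < m.+2) (-1) ^+ j * ('C(m, j))%:Z * f (x + j)%N.
Proof. by rewrite big_ord_recr /= bin_small // mulr0 mul0r addr0. Qed.

Lemma BsS m f x : Bs m.+1 f x = Bs m f x - Bs m f x.+1.
Proof.
rewrite (Bs_ext m f x) /Bs.
rewrite [LHS]big_ord_recl [X in _ = X - _]big_ord_recl /= !bin0 !addn0.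
rewrite -addrA; congr (_ + _).
rewrite -sumrB; apply: eq_bigr => i _.
rewrite /bump /= add1n binS PoszD addSnnS exprS; ring.
Qed.

Lemma Bs_iter m f x : Bs m f x = (-1) ^+ m * iter m Df f x.
Proof.
elim: m x => [|m IH] x.
  by rewrite /Bs big_ord1 /= addn0 !mul1r.
rewrite BsS !IH iterS /Df exprS; ring.
Qed.

Definition bf c p : nat -> int := fun x => ('C(c + x, p))%:Z.

Lemma iter_bf c p k x : (k <= p)%N -> iter k Df (bf c p) x = ('C(c + x, p - k))%:Z.
Proof.
elim: k x => [|k IH] x le; first by rewrite subn0.
rewrite iterS /Df !IH ?(ltnW le) // addnS.
have -> : (p - k = (p - k.+1).+1)%N by rewrite subnS prednK // subn_gt0.
by rewrite binS PoszD [X in X - _]addrC addrK.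
Qed.

Lemma degle_bf c p : degle p (bf c p).
Proof. by move=> x; rewrite iterS /Df !iter_bf // subnn addnS !bin0 subrr. Qed.

Lemma main_int n l p q a r : (p + q <= n)%N -> (l <= n)%N ->
 \sum_(i < l.+1) (\sum_(j < (n - l + 1).+1)
     ('C(r + i + j, p) * 'C(a + r + j, q))%:Z * ((-1) ^+ (n - l + 1 + j) * ('C(n - l + 1, j))%:Z))
   * ((-1) ^+ i * ('C(l, i))%:Z) = 0.
Proof.
move=> hpq hl; set m := (n - l + 1)%N.
under eq_bigr do rewrite mulr_suml.
rewrite exchange_big /=.
have inner : forall j : nat, \sum_(i < l.+1) ('C(r + i + j, p) * 'C(a + r + j, q))%:Z * ((-1) ^+ (m + j) * ('C(m, j))%:Z) * ((-1) ^+ i * ('C(l, i))%:Z)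
   = (-1) ^+ (m + j) * ('C(m, j))%:Z * 'C(a + r + j, q)%:Z * ((-1) ^+ l * iter l Df (bf (r + j) p) 0%N).
  move=> j; rewrite -Bs_iter /Bs mulr_sumr; apply: eq_bigr => i _.
  rewrite /bf add0n PoszM (addnAC r i j); ring.
under eq_bigr do rewrite inner.
case: (leqP l p) => hlp; last first.
  by apply: big1 => j _; rewrite (degle_iter _ _ _ _ hlp (degle_bf _ _)) !mulr0.
have E : forall j : nat, iter l Df (bf (r + j) p) 0%N = bf r (p - l) j.
  by move=> j; rewrite iter_bf // addn0 /bf.
under eq_bigr do rewrite E.
have -> : \sum_(i < m.+1) (-1) ^+ (m + i) * ('C(m, i))%:Z * ('C(a + r + i, q))%:Z * ((-1) ^+ l * bf r (p - l) i)
  = (-1) ^+ (m + l) * Bs m (fun j => bf r (p - l) j * bf (a + r) q j) 0%N.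
  rewrite /Bs mulr_sumr; apply: eq_bigr => i _.
  rewrite /bf add0n !exprD; ring.
rewrite Bs_iter (degle_iter _ _ _ _ _ (degle_mul _ _ _ _ (degle_bf _ _) (degle_bf _ _))) ?mulr0 //.
rewrite /m; lia.
Qed.

Theorem corollary2p13 (C : numClosedFieldType) (n : nat) (hn : (1 <= n)%N)
  (a r l : nat) (hl : (l <= n)%N) :
  \sum_(i < l.+1)
     (\sum_(j < (n - l + 1).+1)
          vbar C n (r + i + j, a + r + j)%N
            *~ ((-1) ^+ (n - l + 1 + j) * ('C(n - l + 1, j))%:Z))
       *~ ((-1) ^+ i * ('C(l, i))%:Z)
  = 0.
Proof.
apply/ffunP => al; rewrite sum_ffunE ffunE.
have hal : ((val al).1 + (val al).2 <= n)%N by case/andP: (valP al).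
have H := main_int _ _ _ _ a r hal hl.
rewrite -[RHS](mulr0z 1) -[X in _ *~ X]H -mulrzl mulr1 rmorph_sum.
apply: eq_bigr => i _.
rewrite ffunMzE sum_ffunE -mulrzr rmorphM /= rmorph_sum; congr (_ * _).
apply: eq_bigr => j _.
rewrite ffunMzE ffunE -mulrzr rmorphM /=; congr (_ * _).
Qed.
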